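(* Let $c_0>0$, $c>0$, $q\in\mathbb Z^+$, and let $\boldsymbol\beta=(\beta_j)_{j\ge1}$ and $(\Upsilon_{\boldsymbol\nu})_{\boldsymbol\nu\in\mathscr F}$ be sequences of non-negative reals such that $\Upsilon_{\boldsymbol 0}\le c_0$ and, for all $\boldsymbol\nu\in\mathscr F\setminus\{\boldsymbol 0\}$, $$\Upsilon_{\boldsymbol\nu}\le\sum_{\substack{\boldsymbol 0\ne\boldsymbol m\le\boldsymbol\nu\\|{\rm supp}(\boldsymbol m)|\le q}}c^{|\boldsymbol m|}\binom{\boldsymbol\nu}{\boldsymbol m}\Upsilon_{\boldsymbol\nu-\boldsymbol m}\prod_{j\in{\rm supp}(\boldsymbol m)}\beta_j.$$ Then for all $\boldsymbol\nu\in\mathscr F$, $$\Upsilon_{\boldsymbol\nu}\le c_0c^{|\boldsymbol\nu|}\sum_{\boldsymbol m\le\boldsymbol\nu}\boldsymbol m!\,D_q(\boldsymbol m)\,\boldsymbol\beta^{\boldsymbol m}\prod_{i\ge1}S(\nu_i,m_i),$$ where $D_q(\boldsymbol 0):=1$ and $D_q(\boldsymbol m):=\sum_{\mathfrak u\subseteq{\rm supp}(\boldsymbol m),\,0\ne|\mathfrak u|\le q}D_q(\boldsymbol m-\boldsymbol e_{\mathfrak u})$ for $\boldsymbol m\ne\boldsymbol 0$, with $\boldsymbol e_{\mathfrak u}:=\sum_{j\in\mathfrak u}\boldsymbol e_j$. If all the hypothesized inequalities are equalities, so is the conclusion. The result also holds with $q=\infty$ (no bounds on $|{\rm supp}(\boldsymbol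 m)|$ and $|\mathfrak u|$).
   Context: $\mathscr F$ is the set of finitely supported multi-indices in $\mathbb N_0^{\mathbb N}$; ${\rm supp}(\boldsymbol\nu)=\{j:\nu_j\ne0\}$, $|\boldsymbol\nu|=\sum\nu_j$, $\boldsymbol\nu!=\prod\nu_j!$, $\boldsymbol\beta^{\boldsymbol\nu}=\prod\beta_j^{\nu_j}$, $\boldsymbol m\le\boldsymbol\nu$ componentwise, $\binom{\boldsymbol\nu}{\boldsymbol m}=\prod_j\binom{\nu_j}{m_j}$, $\boldsymbol e_j$ the $j$th unit multi-index. $S(n,m)=\frac1{m!}\sum_{j=0}^m(-1)^{m-j}\binom mj j^n$ for $n\ge m\ge0$ (Stirling numbers of the second kind, $S(0,0)=1$). *)

(* Defs.v *)
From HB Require Import structures.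
From mathcomp Require Import all_boot all_order all_algebra.
Set Implicit Arguments. Unset Strict Implicit. Unset Printing Implicit Defensive.
Import Order.TTheory GRing.Theory Num.Theory.
Local Open Scope ring_scope.

(* Multi-indices in N_0^N, coordinates indexed by nat (index j of the paper
   is index j-1 here).  Finite support is expressed by [supp_in n nu]:
   nu vanishes outside {0,...,n-1}. *)
Definition mi := nat -> nat.

Definition supp_in (n : nat) (nu : mi) : Prop := forall j, (n <= j)%N -> nu j = 0%N.

Definition ext_mi (n : nat) (f : 'I_n -> nat) : mi :=
  fun j => match (insub j : option 'I_n) with Some i => f i | None => 0%N end.

Definition is_zero_mi (n : nat) (m : mi) : bool := [forall i : 'I_n, m i == 0%N].

Definition abs_mi (n : nat) (m : mi) : nat := (\sum_(i < n) m i)%N.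

Definition fact_mi (n : nat) (m : mi) : nat := (\prod_(i < n) (m i)`!)%N.

Definition binom_mi (n : nat) (nu m : mi) : nat := (\prod_(i < n) 'C(nu i, m i))%N.

Definition supp_card (n : nat) (m : mi) : nat := #|[set i : 'I_n | m i != 0%N]|.

Definition sub_mi (nu m : mi) : mi := fun j => (nu j - m j)%N.

(* |u| <= q, where q = None encodes q = infinity *)
Definition qle (q : option nat) (k : nat) : bool :=
  if q is Some q' then (k <= q')%N else true.

Definition sum_le {R : nmodType} (n : nat) (nu : mi) (P : mi -> bool) (F : mi -> R) : R :=
  \sum_(m : {ffun 'I_n -> 'I_(abs_mi n nu).+1} |
          [forall i : 'I_n, (m i <= nu i)%N] && P (ext_mi (fun i => nat_of_ord (m i))))
     F (ext_mi (fun i => nat_of_ord (m i))).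

Definition e_set (n : nat) (u : {set 'I_n}) : mi := ext_mi (fun i => nat_of_bool (i \in u)).

(* D_q, computed by recursion with fuel; fuel = |m| suffices since every
   recursive step decreases |m| by at least 1. *)
Fixpoint Dfuel (q : option nat) (n : nat) (fuel : nat) (m : mi) : nat :=
  if is_zero_mi n m then 1%N else
  match fuel with
  | 0 => 0%N
  | f.+1 => (\sum_(u : {set 'I_n} | [&& u != set0, u \subset [set i : 'I_n | m i != 0%N]
                                     & qle q #|u|])
               Dfuel q n f (sub_mi m (e_set u)))%N
  end.

Definition Dq (q : option nat) (n : nat) (m : mi) : nat := Dfuel q n (abs_mi n m) m.

Definition stirling2 {R : fieldType} (k m : nat) : R :=
  (m`!%:R)^-1 * \sum_(j < m.+1) (-1) ^+ (m - j) * ('C(m, j))%:R * (j%:R) ^+ k.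

Definition prod_supp {R : nzRingType} (n : nat) (beta : nat -> R) (m : mi) : R :=
  \prod_(i < n | m i != 0%N) beta i.

Definition pow_mi {R : nzRingType} (n : nat) (beta : nat -> R) (m : mi) : R :=
  \prod_(i < n) beta i ^+ m i.

Definition rec_rhs {R : nzRingType} (q : option nat) (c : R) (beta : nat -> R)
  (Ups : mi -> R) (n : nat) (nu : mi) : R :=
  sum_le n nu (fun m => ~~ is_zero_mi n m && qle q (supp_card n m))
    (fun m => c ^+ abs_mi n m * (binom_mi n nu m)%:R * Ups (sub_mi nu m)
              * prod_supp n beta m).

Definition bound_rhs {R : fieldType} (q : option nat) (c0 c : R) (beta : nat -> R)
  (n : nat) (nu : mi) : R :=
  c0 * c ^+ abs_mi n nu *
  sum_le n nu (fun _ => true)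
    (fun m => (fact_mi n m)%:R * (Dq q n m)%:R * pow_mi n beta m
              * \prod_(i < n) stirling2 (nu i) (m i)).

(* Main.v *)
Require Import Defs.
From HB Require Import structures.
From mathcomp Require Import all_boot all_order all_algebra.
From mathcomp Require Import zify ring lra.
From Stdlib Require Import FunctionalExtensionality.
Import Order.TTheory GRing.Theory Num.Theory.
Set Implicit Arguments. Unset Strict Implicit. Unset Printing Implicit Defensive.
Local Open Scope ring_scope.


Lemma extE n (f : 'I_n -> nat) (i : 'I_n) : ext_mi f i = f i.
Proof. by rewrite /ext_mi valK. Qed.

Lemma ext_out n (f : 'I_n -> nat) j : (n <= j)%N -> ext_mi f j = 0%N.
Proof. by move=> h; rewrite /ext_mi insubN // -leqNgt. Qed.

Lemma supp_ext n nu : supp_in n nu -> nu = ext_mi (fun i : 'I_n => nu i).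
Proof.
move=> h; apply: functional_extensionality => j.
case: (ltnP j n) => hj; first by rewrite -[j]/(val (Ordinal hj)) extE.
by rewrite h // ext_out.
Qed.

Lemma mi_eq n (a b : mi) : supp_in n a -> supp_in n b -> (forall i : 'I_n, a i = b i) -> a = b.
Proof.
move=> ha hb h; apply: functional_extensionality => j.
case: (ltnP j n) => hj; first by rewrite -[j]/(val (Ordinal hj)) h.
by rewrite ha // hb.
Qed.

Lemma ext_supp n (f : 'I_n -> nat) : supp_in n (ext_mi f).
Proof. by move=> j; apply: ext_out. Qed.


Section Stir.
Variable R : realFieldType.

Definition sur (k m : nat) : R :=
  \sum_(j < m.+1) (-1) ^+ (m - j) * ('C(m, j))%:R * (j%:R) ^+ k.

Lemma sur_step n k :
  sur n k.+1 + sur n k = \sum_(j < k.+1) (-1) ^+ (k - j) * ('C(k, j))%:R * (j.+1%:R) ^+ n.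
Proof.
rewrite /sur big_ord_recl /= subn0 bin0.
under eq_bigr => j _ do rewrite /= /bump /= add1n subSS binS natrD mulrDr mulrDl.
rewrite big_split /=.
set S := \sum_(i < k.+1) _ * 'C(k, i)%:R * _.
set X := \sum_(i < k.+1) _ * 'C(k, i.+1)%:R * _.
have -> : \sum_(j < k.+1) (-1) ^+ (k - j) * 'C(k, j)%:R * j%:R ^+ n =
   (-1) ^+ k * 0 ^+ n - X.
  rewrite big_ord_recl /= subn0 bin0 mulr1.
  rewrite /X big_ord_recr /= bin_small // mulr0 mul0r addr0.
  congr (_ + _).
  rewrite -sumrN; apply: eq_bigr => i _.
  rewrite /bump /= add1n -[(k - i)%N]subnSK // exprS mulN1r !mulNr opprK //.
rewrite exprS mulN1r mulNr mulr1; ring.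
Qed.

Lemma sur_conv n k :
  \sum_(r < n.+1) ('C(n, r))%:R * sur (n - r) k =
  \sum_(j < k.+1) (-1) ^+ (k - j) * ('C(k, j))%:R * (j.+1%:R) ^+ n.
Proof.
rewrite /sur; under eq_bigr => r _ do rewrite mulr_sumr.
rewrite exchange_big /=; apply: eq_bigr => j _.
rewrite -[j.+1]addn1 natrD exprDn mulr_sumr; apply: eq_bigr => r _.
by rewrite expr1n mulr1 -mulr_natr; ring.
Qed.

Lemma sur_rec n k :
  sur n k.+1 = \sum_(r < n.+1 | (0 < r)%N) ('C(n, r))%:R * sur (n - r) k.
Proof.
apply: (addIr (sur n k)); rewrite sur_step -sur_conv big_mkcond /=.
rewrite [\sum_(r < n.+1) 'C(n, r)%:R * _]big_ord_recl /=.
rewrite bin0 subn0 mul1r addrC; congr (_ + _).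
by rewrite [RHS]big_mkcond big_ord_recl /= add0r.
Qed.

Lemma sur_n0 n : sur n 0 = (n == 0%N)%:R.
Proof. by rewrite /sur big_ord1 /= expr0n bin0 subnn expr0 !mul1r. Qed.

Lemma sur_vanish n k : (n < k)%N -> sur n k = 0.
Proof.
elim: n {-2}n (leqnn n) k => [|N IH] n hn k hk.
  case: k hk => // k _; rewrite sur_rec; have -> : n = 0%N by lia.
  by rewrite big1 // => -[[|r] hr].
case: k hk => // k hk; rewrite sur_rec big1 // => -[[|r] hr] //= _.
by rewrite IH ?mulr0 //; lia.
Qed.

Lemma sur_0k k : sur 0 k = (k == 0%N)%:R.
Proof. by case: k => [|k]; [rewrite sur_n0 | rewrite sur_vanish]. Qed.

End Stir.


Section Dq.
Local Close Scope ring_scope.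
Variables (q : option nat) (n : nat).

Lemma e_setE (u : {set 'I_n}) (i : 'I_n) : e_set u i = (i \in u) :> nat.
Proof. by rewrite /e_set extE. Qed.

Lemma abs_zero (m : mi) : ~~ is_zero_mi n m -> (0 < abs_mi n m)%N.
Proof.
case/forallPn => i /= hi; rewrite /abs_mi (bigD1 i) //=; lia.
Qed.

Lemma zero_abs (m : mi) : is_zero_mi n m -> abs_mi n m = 0%N.
Proof. by move/forallP=> h; rewrite /abs_mi big1 // => i _; apply/eqP. Qed.

Lemma abs_sub (m : mi) (u : {set 'I_n}) : u != set0 -> u \subset [set i : 'I_n | m i != 0%N] ->
  (abs_mi n (sub_mi m (e_set u)) < abs_mi n m)%N.
Proof.
move=> hu hs.
have h1 : (abs_mi n (sub_mi m (e_set u)) + \sum_(i < n) e_set u i = abs_mi n m)%N.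
  rewrite /abs_mi -big_split /=; apply: eq_bigr => i _.
  rewrite /sub_mi e_setE; case: (boolP (i \in u)) => hi /=; last lia.
  move/subsetP: hs => /(_ i hi); rewrite inE; lia.
have : (0 < \sum_(i < n) e_set u i)%N.
  case/set0Pn: hu => i hi; rewrite (bigD1 i) //= e_setE hi; lia.
lia.
Qed.

Lemma Dfuel_eq f1 f2 (m : mi) : (abs_mi n m <= f1)%N -> (abs_mi n m <= f2)%N ->
  Dfuel q n f1 m = Dfuel q n f2 m.
Proof.
elim: f1 f2 m => [|f1 IH] f2 m h1 h2.
  have hz : is_zero_mi n m.
    by apply/negPn/negP => /abs_zero; lia.
  by case: f2 {h2} => [|f2] /=; rewrite hz.
case hz: (is_zero_mi n m); first by case: f2 {h2} => [|f2] /=; rewrite hz.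
have := abs_zero (negbT hz); case: f2 h2 => [|f2] h2 hp; first lia.
rewrite /= hz; apply: eq_bigr => u /and3P [hu hs _].
have := abs_sub hu hs => hlt; apply: IH; lia.
Qed.

Lemma Dq_rec (m : mi) : ~~ is_zero_mi n m ->
  Dq q n m = (\sum_(u : {set 'I_n} | [&& u != set0, u \subset [set i : 'I_n | m i != 0%N]
                                     & qle q #|u|]) Dq q n (sub_mi m (e_set u)))%N.
Proof.
move=> hz; rewrite /Dq; have := abs_zero hz.
case E: (abs_mi n m) => [|a] // _; rewrite /= (negbTE hz).
apply: eq_bigr => u /and3P [hu hs _]; apply: Dfuel_eq => //.
have := abs_sub hu hs; lia.
Qed.

Lemma Dq_zero (m : mi) : is_zero_mi n m -> Dq q n m = 1%N.
Proof. by move=> hz; rewrite /Dq zero_abs //= hz. Qed.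
End Dq.


Definition Ef n B (m : {ffun 'I_n -> 'I_B}) : mi := ext_mi (fun i => nat_of_ord (m i)).

Lemma EfE n B (m : {ffun 'I_n -> 'I_B}) (i : 'I_n) : Ef m i = m i.
Proof. by rewrite /Ef extE. Qed.

Lemma box_le (R : nmodType) n (nu : mi) (P : mi -> bool) (F : mi -> R) B1 B2 :
  (forall i : 'I_n, (nu i <= B1)%N) -> (B1 <= B2)%N ->
  \sum_(m : {ffun 'I_n -> 'I_B1.+1} | [forall i, (m i <= nu i)%N] && P (Ef m)) F (Ef m) =
  \sum_(m : {ffun 'I_n -> 'I_B2.+1} | [forall i, (m i <= nu i)%N] && P (Ef m)) F (Ef m).
Proof.
move=> hnu hB.
have hB' : (B1.+1 <= B2.+1)%N by [].
pose h (m : {ffun 'I_n -> 'I_B1.+1}) : {ffun 'I_n -> 'I_B2.+1} := [ffun i => widen_ord hB' (m i)].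
pose h' (m : {ffun 'I_n -> 'I_B2.+1}) : {ffun 'I_n -> 'I_B1.+1} := [ffun i => inord (m i)].
have hE m : Ef (h m) = Ef m.
  by rewrite /Ef; congr ext_mi; apply: functional_extensionality => i; rewrite ffunE.
symmetry; rewrite (reindex_onto h h').
  apply: eq_big => m; last by rewrite hE.
  rewrite hE; have -> : h' (h m) == m.
    by apply/eqP/ffunP => i; rewrite !ffunE; apply: val_inj; rewrite /= inordK // ltnS -ltnS.
  rewrite andbT; congr (_ && _); apply: eq_forallb => i; by rewrite ffunE.
move=> m /andP [/forallP hm _]; apply/ffunP => i; rewrite !ffunE; apply: val_inj.
rewrite /= inordK // ltnS; apply: leq_trans (hm i) (hnu i).
Qed.

Lemma box_any (R : nmodType) n (nu : mi) (P : mi -> bool) (F : mi -> R) B1 B2 :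
  (forall i : 'I_n, (nu i <= B1)%N) -> (forall i : 'I_n, (nu i <= B2)%N) ->
  \sum_(m : {ffun 'I_n -> 'I_B1.+1} | [forall i, (m i <= nu i)%N] && P (Ef m)) F (Ef m) =
  \sum_(m : {ffun 'I_n -> 'I_B2.+1} | [forall i, (m i <= nu i)%N] && P (Ef m)) F (Ef m).
Proof.
move=> h1 h2; case: (leqP B1 B2) => hB; first exact: box_le.
by symmetry; apply: box_le => //; apply: ltnW.
Qed.

Lemma abs_ge n (nu : mi) (i : 'I_n) : (nu i <= abs_mi n nu)%N.
Proof. by rewrite /abs_mi (bigD1 i) //= leq_addr. Qed.

Lemma sum_le_box (R : nmodType) n (nu : mi) (P : mi -> bool) (F : mi -> R) B :
  (forall i : 'I_n, (nu i <= B)%N) ->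
  sum_le n nu P F =
  \sum_(m : {ffun 'I_n -> 'I_B.+1} | [forall i, (m i <= nu i)%N] && P (Ef m)) F (Ef m).
Proof. by move=> hB; rewrite /sum_le; apply: box_any => // i; apply: abs_ge. Qed.


Lemma prod_cond (R : comPzRingType) (I : finType) (b : I -> bool) (x : I -> R) :
  \prod_i (if b i then x i else 0) = if [forall i, b i] then \prod_i x i else 0.
Proof.
case: ifP => [/forallP h|/negbT/forallPn [i hi]].
  by apply: eq_bigr => i _; rewrite h.
by rewrite (bigD1 i) //= (negbTE hi) mul0r.
Qed.

Section Main.
Variables (R : realFieldType) (q : option nat) (beta : nat -> R) (n B : nat).

Definition T (nu m : mi) : R := \prod_(i < n) sur R (nu i) (m i).

Lemma T_out (nu m : mi) (i : 'I_n) : (nu i < m i)%N -> T nu m = 0.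
Proof. by move=> h; rewrite /T (bigD1 i) //= sur_vanish // mul0r. Qed.

Lemma T_split (nu m : mi) (u : {set 'I_n}) : (forall i : 'I_n, (nu i <= B)%N) ->
  T nu (fun j => m j + e_set u j)%N =
  \sum_(r : {ffun 'I_n -> 'I_B.+1} | ([set i | nat_of_ord (r i) != 0%N] == u) && [forall i, (r i <= nu i)%N])
     (binom_mi n nu (Ef r))%:R * T (sub_mi nu (Ef r)) m.
Proof.
move=> hB.
have hf (i : 'I_n) : sur R (nu i) (m i + e_set u i) =
   \sum_(r : 'I_B.+1) (if ((nat_of_ord r != 0%N) == (i \in u)) && (r <= nu i)%N
                      then ('C(nu i, r))%:R * sur R (nu i - r) (m i) else 0).
  rewrite e_setE; case: (i \in u) => /=.
    rewrite addn1 sur_rec -big_mkcond /=.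
    rewrite (big_ord_widen_cond (B.+1) (fun r => (0 < r)%N) (fun r => 'C(nu i, r)%:R * sur R (nu i - r) (m i))) ?ltnS //.
    by apply: eq_bigl => r; rewrite eqb_id lt0n ltnS.
  rewrite addn0 (bigD1 ord0) //= bin0 subn0 mul1r big1 ?addr0 // => r hr.
  by case: ifP => //; rewrite eqbF_neg negbK => /andP [h _]; move: hr; rewrite -(inj_eq val_inj) /= h.
rewrite /T; under eq_bigr => i _ do rewrite hf.
rewrite bigA_distr_bigA /= [RHS]big_mkcond /=.
apply: eq_bigr => r _; rewrite prod_cond.
have -> : [forall i, ((nat_of_ord (r i) != 0%N) == (i \in u)) && (r i <= nu i)%N] =
          ([set i | nat_of_ord (r i) != 0%N] == u) && [forall i, (r i <= nu i)%N].
  apply/idP/idP.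
    move/forallP => h; apply/andP; split.
      by apply/eqP/setP => i; rewrite inE; have /andP [/eqP -> _] := h i.
    by apply/forallP => i; have /andP [_ ->] := h i.
  case/andP => /eqP hu /forallP h; apply/forallP => i.
  by rewrite h andbT -hu inE.
case: ifP => // _.
rewrite big_split /= /binom_mi natr_prod; congr (_ * _).
  by apply: eq_bigr => i _; rewrite EfE.
by apply: eq_bigr => i _; rewrite /sub_mi EfE.
Qed.


Definition A (nu : mi) : R :=
  \sum_(m : {ffun 'I_n -> 'I_B.+1}) T nu (Ef m) * (Dq q n (Ef m))%:R * pow_mi n beta (Ef m).

Lemma step3 (nu : mi) (u : {set 'I_n}) : (forall i : 'I_n, (nu i <= B)%N) ->
  \sum_(m : {ffun 'I_n -> 'I_B.+1} | u \subset [set i : 'I_n | Ef m i != 0%N])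
     T nu (Ef m) * (Dq q n (sub_mi (Ef m) (e_set u)))%:R * pow_mi n beta (Ef m)
  = \sum_(m : {ffun 'I_n -> 'I_B.+1})
     T nu (fun j => Ef m j + e_set u j)%N * (Dq q n (Ef m))%:R * pow_mi n beta (Ef m)
       * \prod_(i in u) beta i.
Proof.
move=> hB.
pose h (m : {ffun 'I_n -> 'I_B.+1}) : {ffun 'I_n -> 'I_B.+1} := [ffun i => inord (m i + (i \in u))].
pose h' (m : {ffun 'I_n -> 'I_B.+1}) : {ffun 'I_n -> 'I_B.+1} := [ffun i => inord (m i - (i \in u))].
rewrite (reindex_onto h h').
  rewrite big_mkcond; apply: eq_bigr => m _.
  case: (boolP [forall i, (m i + (i \in u) <= B)%N]) => [/forallP hov|/forallPn [i hi]].
    have hE : Ef (h m) = (fun j => Ef m j + e_set u j)%N.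
      apply: (@mi_eq n); first exact: ext_supp.
        by move=> j hj; rewrite /= /Ef /e_set !ext_out.
      by move=> i; rewrite EfE ffunE EfE e_setE inordK // ltnS.
    have -> : u \subset [set i : 'I_n | Ef (h m) i != 0%N].
      apply/subsetP => i hi; rewrite inE hE EfE e_setE hi; lia.
    have -> : h' (h m) == m.
      apply/eqP/ffunP => i; rewrite !ffunE; apply: val_inj => /=.
      have e : nat_of_ord (inord (n':=B) (m i + (i \in u))) = (m i + (i \in u))%N by rewrite inordK // ltnS hov.
      rewrite e inordK; have := hov i; case: (i \in u) => /=; lia.
    have -> : sub_mi (Ef (h m)) (e_set u) = Ef m.
      apply: (@mi_eq n); last by move=> i; rewrite /sub_mi hE EfE; lia.
        by move=> j hj; rewrite /sub_mi /Ef /e_set !ext_out.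
      exact: ext_supp.
    rewrite hE /= -!mulrA; congr (_ * (_ * _)).
    rewrite /pow_mi [\prod_(i in u) _]big_mkcond /= -big_split /=.
    apply: eq_bigr => i _; rewrite EfE e_setE exprD; case: (i \in u) => //=.
  have hiu : i \in u by move: hi; case: (i \in u) => //=; rewrite addn0 -ltnS ltn_ord.
  have -> : u \subset [set i : 'I_n | Ef (h m) i != 0%N] = false.
    apply/negbTE/negP => /subsetP /(_ i hiu); rewrite inE EfE ffunE hiu /=.
    by move: hi; rewrite hiu /= => hi; rewrite val_insubd ltnS (negbTE hi).
  rewrite /= (@T_out nu (fun j => Ef m j + e_set u j)%N i); first by rewrite !mul0r.
  move: hi; rewrite EfE e_setE hiu /= => hi; have := hB i; lia.
move=> m /subsetP hm; apply/ffunP => i; rewrite !ffunE; apply: val_inj => /=.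
have hmi := ltn_ord (m i).
case hiu: (i \in u) => /=.
  have := hm i hiu; rewrite inE EfE -lt0n => h0.
  have e : nat_of_ord (inord (n':=B) (m i - 1)) = (m i - 1)%N by rewrite inordK //; apply: leq_ltn_trans (leq_subr _ _) hmi.
  by rewrite e subnK // inordK // subnK.
by rewrite subn0 addn0 !inordK.
Qed.

Lemma Ef_supp (r : {ffun 'I_n -> 'I_B.+1}) :
  [set i : 'I_n | Ef r i != 0%N] = [set i : 'I_n | nat_of_ord (r i) != 0%N].
Proof. by apply/setP => i; rewrite !inE EfE. Qed.

Lemma zeroE (r : {ffun 'I_n -> 'I_B.+1}) :
  is_zero_mi n (Ef r) = ([set i : 'I_n | nat_of_ord (r i) != 0%N] == set0).
Proof.
apply/forallP/eqP => [h|h i].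
  by apply/setP => i; rewrite !inE -EfE (h i).
by move/setP: h => /(_ i); rewrite !inE EfE => /negbFE.
Qed.

Lemma Ef_card (r : {ffun 'I_n -> 'I_B.+1}) :
  supp_card n (Ef r) = #|[set i : 'I_n | nat_of_ord (r i) != 0%N]|.
Proof. by rewrite /supp_card Ef_supp. Qed.

Lemma Ef_prod (r : {ffun 'I_n -> 'I_B.+1}) :
  prod_supp n beta (Ef r) = \prod_(i in [set i : 'I_n | nat_of_ord (r i) != 0%N]) beta i.
Proof. by rewrite /prod_supp; apply: eq_bigl => i; rewrite inE EfE. Qed.

Lemma A_rec (nu : mi) : (forall i : 'I_n, (nu i <= B)%N) -> ~~ is_zero_mi n nu ->
  A nu = \sum_(r : {ffun 'I_n -> 'I_B.+1} | [forall i, (r i <= nu i)%N] &&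
               (~~ is_zero_mi n (Ef r) && qle q (supp_card n (Ef r))))
          (binom_mi n nu (Ef r))%:R * prod_supp n beta (Ef r) * A (sub_mi nu (Ef r)).
Proof.
move=> hB hnz.
have hT0 m : is_zero_mi n m -> T nu m = 0.
  case/forallPn: hnz => i hi /forallP hz.
  by rewrite /T (bigD1 i) //= (eqP (hz i)) sur_n0 (negbTE hi) mul0r.
rewrite {1}/A.
transitivity (\sum_(m : {ffun 'I_n -> 'I_B.+1})
  \sum_(u : {set 'I_n} | [&& u != set0, u \subset [set i : 'I_n | Ef m i != 0%N] & qle q #|u|])
     T nu (Ef m) * (Dq q n (sub_mi (Ef m) (e_set u)))%:R * pow_mi n beta (Ef m)).
  apply: eq_bigr => m _; case: (boolP (is_zero_mi n (Ef m))) => hz.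
    by rewrite hT0 // !mul0r big1 // => u _; rewrite !mul0r.
  by rewrite Dq_rec // natr_sum mulr_sumr mulr_suml.
rewrite (exchange_big_dep (fun u : {set 'I_n} => (u != set0) && qle q #|u|)); last first.
  by move=> m u _ /and3P [-> _ ->].
transitivity (\sum_(u : {set 'I_n} | (u != set0) && qle q #|u|)
  \sum_(r : {ffun 'I_n -> 'I_B.+1} | ([set i | nat_of_ord (r i) != 0%N] == u) && [forall i, (r i <= nu i)%N])
    (binom_mi n nu (Ef r))%:R * \prod_(i in u) beta i * A (sub_mi nu (Ef r))).
  apply: eq_bigr => u /andP [h1 h2].
  rewrite (eq_bigl (fun m => u \subset [set i : 'I_n | Ef m i != 0%N])); last first.
    by move=> m; rewrite h1 h2 /= andbT.
  rewrite step3 //.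
  rewrite [LHS](eq_bigr (fun m : {ffun 'I_n -> 'I_B.+1} => \sum_(r : {ffun 'I_n -> 'I_B.+1} | ([set i | nat_of_ord (r i) != 0%N] == u) && [forall i, (r i <= nu i)%N])
     (binom_mi n nu (Ef r))%:R * T (sub_mi nu (Ef r)) (Ef m) * (Dq q n (Ef m))%:R * pow_mi n beta (Ef m) * \prod_(i in u) beta i)); last first.
    by move=> m _; rewrite (T_split (Ef m) u hB) !mulr_suml.
  rewrite exchange_big /=; apply: eq_bigr => r _.
  rewrite /A mulr_sumr; apply: eq_bigr => m _; ring.
rewrite (exchange_big_dep (fun r : {ffun 'I_n -> 'I_B.+1} => [forall i, (r i <= nu i)%N])); last first.
  by move=> u r _ /andP [_ ->].
rewrite /= [RHS]big_mkcondr; apply: eq_bigr => r hr.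
rewrite zeroE Ef_card Ef_prod.
set S := [set i : 'I_n | nat_of_ord (r i) != 0%N].
case: (boolP ((S != set0) && qle q #|S|)) => hS.
  rewrite (big_pred1 S) // => u /=; rewrite hr andbT.
  by case: (eqVneq S u) => [<-|hne] /=; rewrite ?hS ?andbF.
rewrite big1 // => u /andP [hu /andP [/eqP hSu _]]; move: hS; rewrite hSu hu //.
Qed.

End Main.


Section Conv.
Variables (R : realFieldType) (q : option nat) (beta : nat -> R) (n B : nat).

Lemma fact_stir (nu m : mi) :
  (fact_mi n m)%:R * \prod_(i < n) stirling2 (nu i) (m i) = T R n nu m :> R.
Proof.
rewrite /fact_mi natr_prod -big_split /=; apply: eq_bigr => i _.
rewrite /stirling2 mulrA mulfV ?mul1r //.
by rewrite pnatr_eq0 -lt0n fact_gt0.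
Qed.

Lemma A_zero (nu : mi) : is_zero_mi n nu -> @A R q beta n B nu = 1.
Proof.
move=> /forallP hz.
have hT m : T R n nu m = \prod_(i < n) (m i == 0%N)%:R.
  by apply: eq_bigr => i _; rewrite (eqP (hz i)) sur_0k.
rewrite /A (bigD1 [ffun _ => ord0]) //= big1 ?addr0.
  have hz0 : is_zero_mi n (Ef [ffun _ : 'I_n => (ord0 : 'I_B.+1)]).
    by apply/forallP => i; rewrite EfE ffunE.
  rewrite hT Dq_zero // /pow_mi !big1 ?mulr1 // => i _; rewrite EfE ffunE //.
move=> m hm; rewrite hT.
have [i hi] : exists i, nat_of_ord (m i) != 0%N.
  apply/existsP; apply: contraR hm; rewrite negb_exists => /forallP h.
  apply/eqP/ffunP => i; rewrite ffunE; apply: val_inj => /=; apply/eqP.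
  by have := h i; rewrite negbK.
by rewrite (bigD1 i) //= EfE (negbTE hi) !mul0r.
Qed.

Lemma bound_A c0 c (nu : mi) : (forall i : 'I_n, (nu i <= B)%N) ->
  bound_rhs q c0 c beta n nu = c0 * c ^+ abs_mi n nu * @A R q beta n B nu.
Proof.
move=> hB; rewrite /bound_rhs (sum_le_box _ _ hB); congr (_ * _).
rewrite /A [RHS](bigID (fun m : {ffun 'I_n -> 'I_B.+1} => [forall i, (m i <= nu i)%N])) /=.
rewrite [X in _ = _ + X]big1 ?addr0.
  apply: eq_big => [m|m _]; first by rewrite andbT.
  by rewrite -fact_stir; ring.
move=> m /forallPn [i]; rewrite -ltnNge => hi.
by rewrite (@T_out R n nu _ i) ?EfE // !mul0r.
Qed.

Lemma rec_box c (Ups : mi -> R) (nu : mi) : (forall i : 'I_n, (nu i <= B)%N) ->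
  rec_rhs q c beta Ups n nu =
  \sum_(r : {ffun 'I_n -> 'I_B.+1} | [forall i, (r i <= nu i)%N] &&
               (~~ is_zero_mi n (Ef r) && qle q (supp_card n (Ef r))))
     c ^+ abs_mi n (Ef r) * (binom_mi n nu (Ef r))%:R * Ups (sub_mi nu (Ef r))
       * prod_supp n beta (Ef r).
Proof. by move=> hB; rewrite /rec_rhs (sum_le_box _ _ hB). Qed.

Lemma abs_split (nu : mi) (r : {ffun 'I_n -> 'I_B.+1}) : [forall i, (r i <= nu i)%N] ->
  abs_mi n nu = (abs_mi n (Ef r) + abs_mi n (sub_mi nu (Ef r)))%N.
Proof.
move/forallP => h; rewrite /abs_mi -big_split /=; apply: eq_bigr => i _.
by rewrite /sub_mi EfE subnKC.
Qed.

Definition W c0 c (nu : mi) : R := c0 * c ^+ abs_mi n nu * @A R q beta n B nu.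

Lemma W_rec c0 c (nu : mi) : (forall i : 'I_n, (nu i <= B)%N) -> ~~ is_zero_mi n nu ->
  W c0 c nu =
  \sum_(r : {ffun 'I_n -> 'I_B.+1} | [forall i, (r i <= nu i)%N] &&
               (~~ is_zero_mi n (Ef r) && qle q (supp_card n (Ef r))))
     c ^+ abs_mi n (Ef r) * (binom_mi n nu (Ef r))%:R * W c0 c (sub_mi nu (Ef r))
       * prod_supp n beta (Ef r).
Proof.
move=> hB hz; rewrite /W A_rec // mulr_sumr; apply: eq_bigr => r /andP [hr _].
rewrite (abs_split hr) exprD; ring.
Qed.

End Conv.


Unset Implicit Arguments.
Theorem lemmaA1 (R : realFieldType) (c0 c : R) (q : option nat)
  (beta : nat -> R) (Ups : mi -> R) :
  0 < c0 -> 0 < c -> (if q is Some q' then (0 < q')%N else true) ->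
  (forall j, 0 <= beta j) ->
  (forall nu, (exists n, supp_in n nu) -> 0 <= Ups nu) ->
  ((Ups (fun _ => 0%N) <= c0 ->
    (forall n nu, supp_in n nu -> ~~ is_zero_mi n nu ->
       Ups nu <= rec_rhs q c beta Ups n nu) ->
    forall n nu, supp_in n nu -> Ups nu <= bound_rhs q c0 c beta n nu)
  /\
   (Ups (fun _ => 0%N) = c0 ->
    (forall n nu, supp_in n nu -> ~~ is_zero_mi n nu ->
       Ups nu = rec_rhs q c beta Ups n nu) ->
    forall n nu, supp_in n nu -> Ups nu = bound_rhs q c0 c beta n nu)).
Proof.
move=> hc0 hc hq hbeta hUps.
have zcase n (v : mi) B : supp_in n v -> is_zero_mi n v ->
    v = (fun _ => 0%N) /\ @W R q beta n B c0 c v = c0.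
  move=> hv hz; split.
    by apply: (@mi_eq n) => // i; apply/eqP/(forallP hz).
  by rewrite /W A_zero // zero_abs // expr0 !mulr1.
have hsub n (v : mi) B (r : {ffun 'I_n -> 'I_B.+1}) : supp_in n v ->
    supp_in n (sub_mi v (Ef r)).
  by move=> hv j hj; rewrite /sub_mi hv.
have habs n (v : mi) B (r : {ffun 'I_n -> 'I_B.+1}) : [forall i, (r i <= v i)%N] ->
    ~~ is_zero_mi n (Ef r) ->
    (abs_mi n (sub_mi v (Ef r)) < abs_mi n v)%N.
  move=> hr hnz; rewrite (abs_split hr); have := abs_zero hnz; lia.
have hgeB n (v : mi) B : (abs_mi n v <= B)%N -> forall i : 'I_n, (v i <= B)%N.
  by move=> h i; apply: leq_trans (abs_ge v i) h.
split.
- move=> h0 hrec n nu hs.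
  pose B := abs_mi n nu.
  have key : forall k (v : mi), supp_in n v -> (abs_mi n v <= B)%N -> (abs_mi n v <= k)%N ->
      Ups v <= @W R q beta n B c0 c v.
    elim=> [|k IH] v hv hvB hvk; case hz: (is_zero_mi n v).
    + by case: (zcase n v B hv hz) => -> ->.
    + by have := abs_zero (negbT hz); lia.
    + by case: (zcase n v B hv hz) => -> ->.
    rewrite (W_rec q beta c0 c (hgeB _ _ _ hvB)) ?hz //.
    apply: le_trans (hrec n v hv (negbT hz)) _.
    rewrite (rec_box _ _ _ _ (hgeB _ _ _ hvB)).
    apply: ler_sum => r /andP [hr /andP [hnz _]].
    apply: ler_wpM2r; first by apply: prodr_ge0.
    apply: ler_wpM2l; first by apply: mulr_ge0; [apply: exprn_ge0; exact: ltW|].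
    have := habs n v B r hr hnz => hlt.
    apply: IH; [exact: hsub | lia | lia].
  suff -> : bound_rhs q c0 c beta n nu = @W R q beta n B c0 c nu.
    exact: (key B nu hs (leqnn _) (leqnn _)).
  exact: (bound_A q beta c0 c (hgeB _ _ _ (leqnn B))).
- move=> h0 hrec n nu hs.
  pose B := abs_mi n nu.
  have key : forall k (v : mi), supp_in n v -> (abs_mi n v <= B)%N -> (abs_mi n v <= k)%N ->
      Ups v = @W R q beta n B c0 c v.
    elim=> [|k IH] v hv hvB hvk; case hz: (is_zero_mi n v).
    + by case: (zcase n v B hv hz) => -> ->.
    + by have := abs_zero (negbT hz); lia.
    + by case: (zcase n v B hv hz) => -> ->.
    rewrite (W_rec q beta c0 c (hgeB _ _ _ hvB)) ?hz //.
    rewrite (hrec n v hv (negbT hz)).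
    rewrite (rec_box _ _ _ _ (hgeB _ _ _ hvB)).
    apply: eq_bigr => r /andP [hr /andP [hnz _]].
    have := habs n v B r hr hnz => hlt.
    rewrite (IH (sub_mi v (Ef r))) //; [exact: hsub | lia | lia].
  suff -> : bound_rhs q c0 c beta n nu = @W R q beta n B c0 c nu.
    exact: (key B nu hs (leqnn _) (leqnn _)).
  exact: (bound_A q beta c0 c (hgeB _ _ _ (leqnn B))).
Qed.
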